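(* Let $\mathcal G=\prod_{i=1}^n\mathcal G^i:\prod_i[k_i]\to\mathbb{R}^n$ be a grid with controlling constant $c$ and let $\delta<c/2$. Then $\mathsf M^{\mathcal G}_\delta$ is a well-defined endofunctor of the category of finitely presented $n$-parameter persistence modules: the module $\mathsf M^{\mathcal G}_\delta(M)$ does not depend (up to isomorphism) on the chosen presentation of $M$, and the induced morphism $\mathsf M^{\mathcal G}_\delta(f)$ is well defined for every morphism $f$.
   Context: Modules are $\mathbb{R}^n$-graded modules over $P_n$ (monoid ring over a field of $([0,\infty)^n,+)$, monomials $\vec x^{\vec a}$); a finitely presented module has a presentation $F_1\xrightarrow{p_1}F_0\to M\to0$ with $F_0=\mathrm{Free}[\{\vec b_i\}]$, $F_1=\mathrm{Free}[\{\vec r_l\}]$ finitely generated free. A grid is $\mathcal G=\prod_i\mathcal G^i$ with $\mathcal G^i:[k_i]\to\mathbb{R}$; its controlling constant is $c(\mathcal G)=\min\{\|\vec a-\vec b\|_\infty:\vec a\ne\vec b\in\mathrm{Im}\,\mathcal G\}$. For $\delta<c/2$, the merge function $\mathsf M^{\mathcal G}_\delta:\mathbb{R}^n\to\mathbb{R}^n$ acts coordinatewise by $x\mapsto\mathcal G^i(k)$ if $x\in[\mathcal G^i(k)-\delta,\mathcal G^i(k)+\delta]$ for some $k$, and $x\mapsto x$ otherwise; it is order preserving. On free modules, $\mathsf M^{\mathcal G}_\delta(\mathrm{Free}[\mathcal X])=\mathrm{Free}[\mathsf M^{\mathcal G}_\delta(\mathcal X)]$ (same generators, grades replaced by their merges),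 and a morphism $\vec b\mapsto\sum_j c_j\vec x^{\vec b-\vec b'_j}\vec b'_j$ is sent to $\mathsf M(\vec b)\mapsto\sum_jc_j\vec x^{\mathsf M(\vec b)-\mathsf M(\vec b'_j)}\mathsf M(\vec b'_j)$. For $M$ with presentation $F_1\to F_0\to M$, $\mathsf M^{\mathcal G}_\delta(M)=\mathrm{coker}\,\mathsf M^{\mathcal G}_\delta(F_1\to F_0)$. For $f:M\to N$, choose a lift $f_0:F_0\to G_0$ to presentations, and set $\mathsf M^{\mathcal G}_\delta(f)$ to be the morphism of cokernels induced by $\mathsf M^{\mathcal G}_\delta(f_0)$. *)

(* Defs.v *)
From HB Require Import structures.
From mathcomp Require Import all_boot all_order all_algebra.
From mathcomp Require Import reals.
Set Implicit Arguments. Unset Strict Implicit. Unset Printing Implicit Defensive.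
Import Order.TTheory GRing.Theory Num.Theory.
Local Open Scope ring_scope.

Section Grades.
Variables (R : realType) (n : nat).

Definition grade := 'I_n -> R.

Definition leg (a b : grade) : bool := [forall i, a i <= b i].

Definition dist_inf (a b : grade) : R := \big[Num.max/0]_(i < n) `|a i - b i|.

Variables (kk : 'I_n -> nat) (G : forall i : 'I_n, 'I_(kk i) -> R).

Definition gpt (u : forall i : 'I_n, 'I_(kk i)) : grade := fun i => G (u i).

Definition is_ctrl_const (c : R) : Prop :=
  (exists u v, gpt u <> gpt v /\ dist_inf (gpt u) (gpt v) = c) /\
  (forall u v, gpt u <> gpt v -> c <= dist_inf (gpt u) (gpt v)).

(* the hypothesis delta < c(G)/2 (vacuous when Im G has fewer than two points,
   i.e. when the minimum is over the empty set, c = +oo) *)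
Definition delta_lt_half_ctrl (d : R) : Prop :=
  forall c, is_ctrl_const c -> d < c / 2.

Definition merge (d : R) (a : grade) : grade := fun i =>
  match [pick k : 'I_(kk i) | (G k - d <= a i) && (a i <= G k + d)] with
  | Some k => G k
  | None => a i
  end.

End Grades.

Section Modules.
Variables (K : fieldType) (R : realType) (n : nat).
Local Notation grade := (grade R n).
Local Notation leg := (@leg R n).

(* An R^n-graded module over P_n: graded pieces V a (K-vector spaces) and
   the action of monomials x^(b-a) : V a -> V b for a <= b
   (tr is only meaningful when leg a b). *)
Record pmod := PMod {
  V :> grade -> lmodType K;
  tr : forall a b : grade, V a -> V b
}.

Definition is_pmod (M : pmod) : Prop :=
  (forall a b, leg a b -> linear (@tr M a b)) /\
  (forall a x, @tr M a a x = x) /\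
  (forall a b c, leg a b -> leg b c -> forall x,
      @tr M b c (@tr M a b x) = @tr M a c x).

Definition is_morph (M N : pmod) (f : forall a, M a -> N a) : Prop :=
  (forall a, linear (f a)) /\
  (forall a b, leg a b -> forall x, f b (@tr M a b x) = @tr N a b (f a x)).

Definition is_iso (M N : pmod) (f : forall a, M a -> N a) : Prop :=
  is_morph f /\ exists g : forall a, N a -> M a,
    [/\ is_morph g, (forall a x, g a (f a x) = x) & (forall a y, f a (g a y) = y)].

Definition pmod_iso (M N : pmod) : Prop := exists f, @is_iso M N f.

(* A presentation F1 --p1--> F0 of free modules, F0 = Free[{gen i}],
   F1 = Free[{rel l}], p1 (rel l) = sum_i pmx l i x^(rel l - gen i) (gen i). *)
Record pres := Pres {
  ng : nat; nr : nat;
  gen : 'I_ng -> grade;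
  rel : 'I_nr -> grade;
  pmx : 'M[K]_(nr, ng)
}.
Arguments ng : clear implicits. Arguments nr : clear implicits.
Arguments gen : clear implicits. Arguments rel : clear implicits.
Arguments pmx : clear implicits.

(* a morphism Free[{b_i}] -> Free[{b'_j}], b_i |-> sum_j c i j x^(b_i-b'_j) b'_j,
   is given by its coefficient matrix c, which must satisfy
   c i j <> 0 -> b'_j <= b_i (row-vector convention: x |-> x *m c) *)
Definition graded_mx m1 m2 (b : 'I_m1 -> grade) (b' : 'I_m2 -> grade)
  (c : 'M[K]_(m1, m2)) : Prop :=
  forall i j, c i j != 0 -> leg (b' j) (b i).

Definition graded_pres (P : pres) : Prop := graded_mx (rel P) (gen P) (pmx P).

(* degree-a part of F0 = Free[{gen i}], inside K^(ng): span of the generators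
   of grade <= a (x^(a - gen i) gen i is identified with the i-th basis row) *)
Definition Fsp (P : pres) (a : grade) : {vspace 'rV[K]_(ng P)} :=
  <<[seq (delta_mx ord0 i : 'rV[K]_(ng P)) | i <- enum 'I_(ng P) & leg (gen P i) a]>>%VS.

Definition Rsp (P : pres) (a : grade) : {vspace 'rV[K]_(ng P)} :=
  <<[seq row l (pmx P) | l <- enum 'I_(nr P) & leg (rel P l) a]>>%VS.

(* the quotient (F0)_a / im(p1)_a, realised as a complement of im(p1)_a in (F0)_a *)
Definition Csp (P : pres) (a : grade) : {vspace 'rV[K]_(ng P)} :=
  (Fsp P a :\: Rsp P a)%VS.

Definition qmap (P : pres) (a : grade) (x : 'rV[K]_(ng P)) : subvs_of (Csp P a) :=
  vsproj (Csp P a) (addv_pi1 (Fsp P a) (Rsp P a) x).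

Definition coker (P : pres) : pmod :=
  @PMod (fun a => subvs_of (Csp P a)) (fun a b x => @qmap P b (vsval x)).

Definition presents (P : pres) (M : pmod) (alpha : forall a, coker P a -> M a) : Prop :=
  graded_pres P /\ @is_iso (coker P) M alpha.

Definition is_lift (P Q : pres) (M N : pmod)
  (alpha : forall a, coker P a -> M a) (beta : forall a, coker Q a -> N a)
  (f : forall a, M a -> N a) (c : 'M[K]_(ng P, ng Q)) : Prop :=
  graded_mx (gen P) (gen Q) c /\
  forall a (x : 'rV[K]_(ng P)), x \in Fsp P a ->
    f a (alpha a (@qmap P a x)) = beta a (@qmap Q a (x *m c)).

Definition ind (P Q : pres) (c : 'M[K]_(ng P, ng Q)) :
  forall a, coker P a -> coker Q a :=
  fun a y => @qmap Q a (vsval y *m c).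

Definition induces (P Q : pres) (c : 'M[K]_(ng P, ng Q)) : Prop :=
  (forall a x, x \in Fsp P a -> ind c (@qmap P a x) = @qmap Q a (x *m c)) /\
  is_morph (ind c).


End Modules.

Arguments gen {K R n} p _. Arguments rel {K R n} p _. Arguments pmx {K R n} p.
Arguments ng {K R n} p. Arguments nr {K R n} p.
Arguments tr {K R n} p a b _.
Arguments qmap {K R n} P a x.
Arguments ind {K R n} P Q c a _.
Arguments is_morph {K R n} M N f.
Arguments is_iso {K R n} M N f.
Arguments is_lift {K R n} P Q M N alpha beta f c.
Arguments induces {K R n} P Q c.
Arguments presents {K R n} P M alpha.
Arguments merge {R n kk} G d a _.

Definition mpres (K : fieldType) (R : realType) (n : nat) (kk : 'I_n -> nat)
  (G : forall i : 'I_n, 'I_(kk i) -> R) (d : R) (P : pres K R n) : pres K R n :=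
  @Pres K R n (ng P) (nr P) (fun i => merge G d (gen P i))
    (fun l => merge G d (rel P l)) (pmx P).

(* Main.v *)
Require Import Defs.
From HB Require Import structures.
From mathcomp Require Import all_boot all_order all_algebra.
From mathcomp Require Import reals.
Import Order.TTheory GRing.Theory Num.Theory.
Local Open Scope ring_scope.

From mathcomp Require Import ring lra.
From Stdlib Require Import FunctionalExtensionality.
Set Implicit Arguments. Unset Strict Implicit. Unset Printing Implicit Defensive.



Section Merge.
Variables (R : realType) (n : nat) (kk : 'I_n -> nat)
  (G : forall i : 'I_n, 'I_(kk i) -> R) (d : R).
Hypothesis Hk : forall i, (0 < kk i)%N.
Hypothesis Hd : delta_lt_half_ctrl G d.

Lemma leg_refl (a : grade R n) : leg a a.
Proof. by apply/forallP => i. Qed.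

Lemma leg_trans (a b c : grade R n) : leg a b -> leg b c -> leg a c.
Proof.
move=> /forallP H1 /forallP H2; apply/forallP => i; exact: le_trans (H1 i) (H2 i).
Qed.

Lemma ctrl_exists (u v : forall i, 'I_(kk i)) : gpt G u <> gpt G v ->
  exists c, is_ctrl_const G c.
Proof.
move=> Huv.
pose T := {dffun forall j : 'I_n, 'I_(kk j)}.
pose Pp := fun p : T * T => ~~ [forall j, G (p.1 j) == G (p.2 j)].
pose F := fun p : T * T => dist_inf (gpt G (fun j => p.1 j)) (gpt G (fun j => p.2 j)).
pose p0 : T * T := (finfun u, finfun v).
have Pp0 : Pp p0.
  apply/negP => /forallP H; apply: Huv; apply: functional_extensionality => j.
  by rewrite /gpt; move/eqP: (H j); rewrite /p0 /= !ffunE.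
case: (arg_minP F Pp0) => p Ppp Hmin.
exists (F p); split.
  exists (fun j => p.1 j), (fun j => p.2 j); split => //.
  move=> E; move/negP: Ppp; apply; apply/forallP => j.
  by have := congr1 (fun h => h j) E; rewrite /gpt => ->.
move=> u' v' Huv'.
have Pq : Pp (finfun u', finfun v').
  apply/negP => /forallP H; apply: Huv'; apply: functional_extensionality => j.
  by rewrite /gpt; move/eqP: (H j); rewrite /= !ffunE.
have := Hmin _ Pq; rewrite /F /=.
suff -> : gpt G (fun j => (finfun u' : T) j) = gpt G u'.
  suff -> : gpt G (fun j => (finfun v' : T) j) = gpt G v' by [].
  by apply: functional_extensionality => j; rewrite /gpt ffunE.
by apply: functional_extensionality => j; rewrite /gpt ffunE.
Qed.

Lemma gap i (k k' : 'I_(kk i)) : G k' < G k -> d < (G k - G k') / 2.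
Proof.
move=> Hlt.
pose u0 := fun j => Ordinal (Hk j).
pose u := fun j => if j == i then insubd (u0 j) (val k) else u0 j.
pose v := fun j => if j == i then insubd (u0 j) (val k') else u0 j.
have Hui : G (u i) = G k.
  rewrite /u eqxx; congr (G _); apply: val_inj; by rewrite val_insubd ltn_ord.
have Hvi : G (v i) = G k'.
  rewrite /v eqxx; congr (G _); apply: val_inj; by rewrite val_insubd ltn_ord.
have Huv : gpt G u <> gpt G v.
  move=> E; have := congr1 (fun h => h i) E; rewrite /gpt Hui Hvi => E'.
  by move: Hlt; rewrite E' ltxx.
have [c Hc] := ctrl_exists Huv.
have H1 := Hd Hc.
have H2 := Hc.2 _ _ Huv.
have H3 : dist_inf (gpt G u) (gpt G v) <= G k - G k'.
  rewrite /dist_inf; apply: (big_ind (fun x => x <= G k - G k')).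
  - by rewrite subr_ge0 ltW.
  - by move=> x y Hx Hy; rewrite ge_max Hx Hy.
  move=> j _; rewrite /gpt; case: (eqVneq j i) => [->|Hji].
    by rewrite Hui Hvi gtr0_norm // subr_gt0.
  by rewrite /u /v (negbTE Hji) subrr normr0 subr_ge0 ltW.
apply: (lt_le_trans H1); rewrite ler_pdivrMr // divfK ?pnatr_eq0 //.
exact: le_trans H2 H3.
Qed.

Lemma merge_mono (a b : grade R n) : leg a b -> leg (Defs.merge G d a) (Defs.merge G d b).
Proof.
move=> /forallP Hab; apply/forallP => i; have Hx := Hab i.
rewrite /Defs.merge.
case: pickP => [k /andP [Hk1 Hk2]|Hn1]; case: pickP => [k' /andP [Hk1' Hk2']|Hn2] //.
- rewrite leNgt; apply/negP => Hlt.
  have := gap Hlt; rewrite ltr_pdivlMr // => Hg.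
  have : G k - d <= G k' + d by apply: le_trans Hk1 (le_trans Hx Hk2').
  rewrite leNgt => /negP; apply.
  lra.
- rewrite leNgt; apply/negP => Hlt.
  have := Hn2 k; rewrite (le_trans Hk1 Hx) /=.
  have Hd0 : 0 <= d by have := le_trans Hk1 Hk2; lra.
  by move/negbT; rewrite -ltNge => ?; lra.
- rewrite leNgt; apply/negP => Hlt.
  have := Hn1 k'; rewrite (le_trans Hx Hk2') andbT.
  have Hd0 : 0 <= d by have := le_trans Hk1' Hk2'; lra.
  by move/negbT; rewrite -ltNge => ?; lra.
Qed.
End Merge.



Section LA.
Variables (K : fieldType) (m : nat).
Implicit Types U V W : {vspace 'rV[K]_m}.

Lemma pi1_V U V v : v \in V -> addv_pi1 U V v = 0.
Proof.
move=> Vv; have := addv_pi1_pi2 ((subvP (addvSr U V)) v Vv).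
rewrite addv_pi2_id // => E; apply: (addIr v); by rewrite E add0r.
Qed.

Lemma pi1_diff U V u : u \in (U :\: V)%VS -> addv_pi1 U V u = u.
Proof. exact: daddv_pi_id (capv_diff U V). Qed.

Definition qm U V (x : 'rV[K]_m) : subvs_of (U :\: V) :=
  vsproj (U :\: V) (addv_pi1 U V x).

Lemma qm_val U V (y : subvs_of (U :\: V)) : qm U V (vsval y) = y.
Proof. by rewrite /qm pi1_diff ?subvsP // vsvalK. Qed.

Lemma qm_V U V v : v \in V -> qm U V v = 0.
Proof. by move=> Vv; rewrite /qm pi1_V // linear0. Qed.

Lemma qm_lin U V : linear (qm U V).
Proof. by move=> k x y; rewrite /qm !linearP. Qed.

Lemma qm_D U V x y : qm U V (x + y) = qm U V x + qm U V y.
Proof. by rewrite /qm !linearD. Qed.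

Lemma qm_eq U V x x' : x - x' \in V -> qm U V x = qm U V x'.
Proof.
move=> H; have -> : x = (x - x') + x' by rewrite subrK.
by rewrite qm_D qm_V // add0r.
Qed.

Lemma qm_sub U V x : x \in U -> x - vsval (qm U V x) \in V.
Proof.
move=> Ux; rewrite /qm vsprojK ?memv_pi //.
have := addv_pi1_pi2 ((subvP (addvSl U V)) x Ux).
move=> E; rewrite -{1}E addrC addKr; exact: memv_pi2.
Qed.

Lemma qm_ker U V x : x \in U -> qm U V x = 0 -> x \in V.
Proof.
move=> Ux H; have E : vsval (qm U V x) = 0 by rewrite H linear0.
by have := @qm_sub U V x Ux; rewrite E subr0.
Qed.

Lemma span_map (s : seq 'rV[K]_m) p (c : 'M[K]_(m, p)) (W : {vspace 'rV[K]_p}) :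
  (forall v, v \in s -> v *m c \in W) -> forall z, z \in <<s>>%VS -> z *m c \in W.
Proof.
move=> H z /(coord_span (X := in_tuple s)) ->.
rewrite mulmx_suml; apply: memv_suml => i _; rewrite -scalemxAl; apply: memvZ.
by apply: H; apply: mem_nth.
Qed.

End LA.



Section Pres.
Variables (K : fieldType) (R : realType) (n : nat).
Implicit Types P Q : pres K R n.

Lemma memF1 P a i : leg (gen P i) a -> delta_mx 0 i \in Fsp P a.
Proof.
move=> H; apply: memv_span; apply/mapP; exists i => //.
by rewrite mem_filter H mem_enum.
Qed.

Lemma memF_coef P a (x : 'rV[K]_(ng P)) j : x \in Fsp P a -> x 0 j != 0 -> leg (gen P j) a.
Proof.
move=> Hx; apply: contraR => Hj.
pose W : {vspace 'rV[K]_1} := if leg (gen P j) a then fullv else 0%VS.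
have : x *m delta_mx j 0 \in W.
  apply: (span_map _ Hx) => v /mapP [i]; rewrite mem_filter => /andP [Hi _] ->.
  rewrite mul_delta_mx_cond; case: (eqVneq i j) => [Eij|_].
    by rewrite /W -Eij Hi memvf.
  by rewrite mulr0n mem0v.
rewrite /W (negbTE Hj) memv0 -colE => /eqP E.
by have := congr1 (fun M : 'cV[K]_1 => M 0 0) E; rewrite !mxE => ->.
Qed.

Lemma memF_intro P a (x : 'rV[K]_(ng P)) : (forall j, x 0 j != 0 -> leg (gen P j) a) -> x \in Fsp P a.
Proof.
move=> H; rewrite [x]row_sum_delta; apply: memv_suml => j _.
case: (eqVneq (x 0 j) 0) => [->|Hj]; first by rewrite scale0r mem0v.
by apply: memvZ; apply: memF1; apply: H.
Qed.

Lemma FspS P a b : leg a b -> (Fsp P a <= Fsp P b)%VS.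
Proof.
move=> Hab; apply/span_subvP => v /mapP [i]; rewrite mem_filter => /andP [Hi _] ->.
by apply: memF1; apply: leg_trans Hab.
Qed.

Lemma memR P a l : leg (Defs.rel P l) a -> row l (pmx P) \in Rsp P a.
Proof.
move=> H; apply: memv_span; apply/mapP; exists l => //.
by rewrite mem_filter H mem_enum.
Qed.

Lemma RspS P a b : leg a b -> (Rsp P a <= Rsp P b)%VS.
Proof.
move=> Hab; apply/span_subvP => v /mapP [i]; rewrite mem_filter => /andP [Hi _] ->.
by apply: memR; apply: leg_trans Hab.
Qed.

Lemma Fsp_mul P Q (c : 'M[K]_(ng P, ng Q)) a (x : 'rV[K]_(ng P)) : graded_mx (gen P) (gen Q) c -> x \in Fsp P a ->
  x *m c \in Fsp Q a.
Proof.
move=> Hc; apply: span_map => v /mapP [i]; rewrite mem_filter => /andP [Hi _] ->.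
rewrite -rowE; apply: memF_intro => j; rewrite mxE => Hij.
exact: leg_trans (Hc _ _ Hij) Hi.
Qed.

Lemma Csp_F P a (y : subvs_of (Csp P a)) : vsval y \in Fsp P a.
Proof. exact: (subvP (diffvSl _ _)) _ (subvsP y). Qed.

Lemma qmap_eq P a (x x' : 'rV[K]_(ng P)) : x - x' \in Rsp P a -> qmap P a x = qmap P a x'.
Proof. exact: qm_eq. Qed.

Lemma qmap_val P a (y : subvs_of (Csp P a)) : qmap P a (vsval y) = y.
Proof. exact: qm_val. Qed.

Lemma qmap_sub P a (x : 'rV[K]_(ng P)) : x \in Fsp P a -> x - vsval (qmap P a x) \in Rsp P a.
Proof. exact: qm_sub. Qed.

Lemma qmap_ker P a (x : 'rV[K]_(ng P)) : x \in Fsp P a -> qmap P a x = 0 -> x \in Rsp P a.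
Proof. exact: qm_ker. Qed.

Lemma qmap_V P a (x : 'rV[K]_(ng P)) : x \in Rsp P a -> qmap P a x = 0.
Proof. exact: qm_V. Qed.

Lemma qmap_lin P a : linear (qmap P a).
Proof. exact: qm_lin. Qed.

End Pres.

Section Lin.
Variables (K : fieldType) (U V : lmodType K) (h : U -> V).
Hypothesis Hh : linear h.

Lemma lin0 : h 0 = 0.
Proof.
have := Hh 1 0 0; rewrite !scale1r !addr0 => E.
by apply: (addIr (h 0)); rewrite add0r -E.
Qed.

Lemma linD x y : h (x + y) = h x + h y.
Proof. by have := Hh 1 x y; rewrite !scale1r. Qed.

Lemma linZ k x : h (k *: x) = k *: h x.
Proof. by have := Hh k x 0; rewrite !addr0 lin0 addr0. Qed.

Lemma linB x y : h (x - y) = h x - h y.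
Proof. by rewrite -scaleN1r linD linZ scaleN1r. Qed.

Lemma lin_sum (I : Type) (r : seq I) (Pr : pred I) (F : I -> U) :
  h (\sum_(i <- r | Pr i) F i) = \sum_(i <- r | Pr i) h (F i).
Proof.
elim: r => [|x r IH]; first by rewrite !big_nil lin0.
rewrite !big_cons; case: (Pr x) => //; by rewrite linD IH.
Qed.
End Lin.



Section Lift.
Variables (K : fieldType) (R : realType) (n : nat).
Variables (M N : pmod K R n) (P Q : pres K R n).
Unset Implicit Arguments.
Variables (alpha : forall a, coker P a -> M a) (beta : forall a, coker Q a -> N a)
  (f : forall a, M a -> N a).
Set Implicit Arguments.
Hypotheses (HP : presents P M alpha) (HQ : presents Q N beta) (Hf : is_morph M N f).

Lemma beta_inj a y y' : beta a y = beta a y' -> y = y'.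
Proof.
case: HQ => _ [_ [g [_ Hg _]]] E.
by rewrite -(Hg a y) E Hg.
Qed.

Lemma lift_rel c : is_lift P Q M N alpha beta f c ->
  forall l, row l (pmx P) *m c \in Rsp Q (Defs.rel P l).
Proof.
move=> [Hc Hl] l; set b := Defs.rel P l.
have Fr : row l (pmx P) \in Fsp P b.
  by apply: memF_intro => j; rewrite mxE; apply: HP.1.
apply: qmap_ker; first exact: Fsp_mul.
have := Hl b _ Fr; rewrite qmap_V ?memR ?leg_refl //.
rewrite (lin0 (HP.2.1.1 b)) (lin0 (Hf.1 b)) => E.
apply: (@beta_inj b); by rewrite -E (lin0 (HQ.2.1.1 b)).
Qed.

Lemma lift_diff c c' : is_lift P Q M N alpha beta f c -> is_lift P Q M N alpha beta f c' ->
  forall i, delta_mx 0 i *m (c - c') \in Rsp Q (gen P i).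
Proof.
move=> [Hc Hl] [Hc' Hl'] i; set b := gen P i.
have Fe : delta_mx 0 i \in Fsp P b by apply: memF1; apply: leg_refl.
apply: qmap_ker.
  by rewrite mulmxBr; apply: memvB; apply: Fsp_mul.
have E : qmap Q b (delta_mx 0 i *m c) = qmap Q b (delta_mx 0 i *m c').
  by apply: (@beta_inj b); rewrite -(Hl b _ Fe) -(Hl' b _ Fe).
by rewrite mulmxBr (linB (@qmap_lin _ _ _ Q b)) E subrr.
Qed.

Lemma lift_exists : exists c, is_lift P Q M N alpha beta f c.
Proof.
case: (HQ) => _ [HbM [g [_ Hg Hbg]]].
case: (HP) => _ [HaM _].
pose gy i : coker Q (gen P i) :=
  g (gen P i) (f (gen P i) (alpha (gen P i) (qmap P (gen P i) (delta_mx 0 i)))).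
pose c : 'M[K]_(ng P, ng Q) := \matrix_i vsval (gy i).
exists c; split.
  move=> i j; rewrite mxE => Hij.
  exact: memF_coef (Csp_F (gy i)) Hij.
move=> a x Hx.
rewrite {1}[x]row_sum_delta [x in x *m c]row_sum_delta.
rewrite (lin_sum (@qmap_lin _ _ _ P a)) (lin_sum (HaM.1 a)) (lin_sum (Hf.1 a)).
rewrite mulmx_suml (lin_sum (@qmap_lin _ _ _ Q a)) (lin_sum (HbM.1 a)).
apply: eq_bigr => j _.
rewrite -scalemxAl (linZ (@qmap_lin _ _ _ P a)) (linZ (HaM.1 a)) (linZ (Hf.1 a)).
rewrite (linZ (@qmap_lin _ _ _ Q a)) (linZ (HbM.1 a)).
case: (eqVneq (x 0 j) 0) => [->|Hj]; first by rewrite !scale0r.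
congr (_ *: _).
have Hba : leg (gen P j) a := memF_coef Hx Hj.
set b := gen P j.
have E1 : qmap P a (delta_mx 0 j) = tr (coker P) b a (qmap P b (delta_mx 0 j)).
  rewrite /=; apply: qmap_eq.
  apply: (subvP (RspS P Hba)); apply: qmap_sub; apply: memF1; exact: leg_refl.
rewrite E1 (HaM.2 _ _ Hba) (Hf.2 _ _ Hba).
rewrite -(Hbg b (f b (alpha b (qmap P b (delta_mx 0 j))))) -/(gy j).
rewrite -(HbM.2 _ _ Hba) /= -rowE rowK.
by [].
Qed.

End Lift.

Section Comp.
Variables (K : fieldType) (R : realType) (n : nat).
Variables (M N L : pmod K R n) (P Q S : pres K R n).
Unset Implicit Arguments.
Variables (alpha : forall a, coker P a -> M a) (beta : forall a, coker Q a -> N a)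
  (gamma : forall a, coker S a -> L a)
  (f : forall a, M a -> N a) (g : forall a, N a -> L a)
  (c : 'M[K]_(ng P, ng Q)) (d : 'M[K]_(ng Q, ng S)).
Set Implicit Arguments.

Lemma graded_mul m1 m2 m3 (b1 : 'I_m1 -> grade R n) (b2 : 'I_m2 -> grade R n)
  (b3 : 'I_m3 -> grade R n) (c1 : 'M[K]_(m1, m2)) (c2 : 'M[K]_(m2, m3)) :
  graded_mx b1 b2 c1 -> graded_mx b2 b3 c2 -> graded_mx b1 b3 (c1 *m c2).
Proof.
move=> H1 H2 i k; rewrite mxE => Hs.
case: (pickP (fun j => c1 i j * c2 j k != 0)) => [j Hj|Hn]; last first.
  by move: Hs; rewrite big1 ?eqxx // => j _; apply/eqP; move: (Hn j) => /negbT; rewrite negbK.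
move: Hj; rewrite mulf_eq0 negb_or => /andP [Hij Hjk].
exact: leg_trans (H2 _ _ Hjk) (H1 _ _ Hij).
Qed.

Lemma lift_comp : is_lift P Q M N alpha beta f c -> is_lift Q S N L beta gamma g d ->
  is_lift P S M L alpha gamma (fun a x => g a (f a x)) (c *m d).
Proof.
move=> [Hc Hl] [Hd Hl']; split; first exact: graded_mul Hc Hd.
move=> a x Hx; rewrite Hl // Hl' ?mulmxA //; exact: Fsp_mul.
Qed.
End Comp.



Section Merged.
Variables (K : fieldType) (R : realType) (n : nat)
  (kk : 'I_n -> nat) (G : forall i : 'I_n, 'I_(kk i) -> R) (d : R).
Hypothesis Hk : forall i, (0 < kk i)%N.
Hypothesis Hd : delta_lt_half_ctrl G d.
Local Notation mp := (@mpres K R n kk G d).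
Let Hm := merge_mono Hk Hd.

Lemma RspM (Q : pres K R n) b : (Rsp Q b <= Rsp (mp Q) (Defs.merge G d b))%VS.
Proof.
apply/span_subvP => v /mapP [l]; rewrite mem_filter => /andP [Hl _] ->.
exact: (@memR _ _ _ (mp Q)) (Hm Hl).
Qed.

Lemma graded_m (P Q : pres K R n) (c : 'M[K]_(ng P, ng Q)) : graded_mx (gen P) (gen Q) c ->
  graded_mx (gen (mp P)) (gen (mp Q)) c.
Proof. by move=> Hc i j H; apply: Hm; apply: Hc. Qed.

Section ML.
Variables (M N : pmod K R n) (P Q : pres K R n).
Unset Implicit Arguments.
Variables (alpha : forall a, coker P a -> M a) (beta : forall a, coker Q a -> N a)
  (f : forall a, M a -> N a).
Set Implicit Arguments.
Hypotheses (HP : presents P M alpha) (HQ : presents Q N beta) (Hf : is_morph M N f).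

Lemma mrel c : is_lift P Q M N alpha beta f c ->
  forall a z, z \in Rsp (mp P) a -> z *m c \in Rsp (mp Q) a.
Proof.
move=> Hl a z Hz; apply: (span_map _ Hz) => v /mapP [l]; rewrite mem_filter => /andP [Hla _] ->.
apply: (subvP (RspS (mp Q) Hla)); apply: (subvP (RspM Q (Defs.rel P l))).
exact (lift_rel HP HQ Hf Hl l).
Qed.

Lemma mdiff c c' : is_lift P Q M N alpha beta f c -> is_lift P Q M N alpha beta f c' ->
  forall a z, z \in Fsp (mp P) a -> z *m (c - c') \in Rsp (mp Q) a.
Proof.
move=> Hl Hl' a z Hz; apply: (span_map _ Hz) => v /mapP [i]; rewrite mem_filter => /andP [Hia _] ->.
apply: (subvP (RspS (mp Q) Hia)); apply: (subvP (RspM Q (gen P i))).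
exact (lift_diff HQ Hl Hl' i).
Qed.

Lemma m_induces c : is_lift P Q M N alpha beta f c -> induces (mp P) (mp Q) c.
Proof.
move=> Hl; have Hc := graded_m Hl.1; split.
  move=> a x Hx; rewrite /ind; apply (qmap_eq (P:=mp _)).
  rewrite -mulmxBl -opprB mulNmx memvN; apply: (mrel Hl); exact: qmap_sub.
split.
  move=> a k y z; rewrite /ind linearP /= mulmxDl -scalemxAl.
  exact (@qmap_lin _ _ _ (mp Q) a k _ _).
move=> a b Hab y; rewrite /ind /=.
transitivity (qmap (mp Q) b (vsval y *m c)).
  apply (qmap_eq (P:=mp _)).
  rewrite -mulmxBl -opprB mulNmx memvN; apply: (mrel Hl); apply: qmap_sub.
  exact: (subvP (FspS (mp P) Hab)) _ (Csp_F y).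
apply (qmap_eq (P:=mp _)); apply: (subvP (RspS (mp Q) Hab)); apply: qmap_sub.
exact: Fsp_mul Hc (Csp_F y).
Qed.

Lemma m_ind_eq c c' : is_lift P Q M N alpha beta f c -> is_lift P Q M N alpha beta f c' ->
  forall a y, ind (mp P) (mp Q) c a y = ind (mp P) (mp Q) c' a y.
Proof.
move=> Hl Hl' a y; rewrite /ind; apply (qmap_eq (P:=mp _)).
rewrite -mulmxBr; apply: (mdiff Hl Hl'); exact: Csp_F.
Qed.
End ML.

Lemma m_ind_comp (M N L : pmod K R n) (P Q S : pres K R n)
  (alpha : forall a, coker P a -> M a) (beta : forall a, coker Q a -> N a)
  (gamma : forall a, coker S a -> L a)
  (f : forall a, M a -> N a) (g : forall a, N a -> L a)
  (c : 'M[K]_(ng P, ng Q)) (e : 'M[K]_(ng Q, ng S)) :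
  presents Q N beta -> presents S L gamma -> is_morph N L g ->
  is_lift P Q M N alpha beta f c -> is_lift Q S N L beta gamma g e ->
  forall a y, ind (mp P) (mp S) (c *m e) a y
                  = ind (mp Q) (mp S) e a (ind (mp P) (mp Q) c a y).
Proof.
move=> HQ HS Hg Hl He a y; rewrite /ind mulmxA; apply (qmap_eq (P:=mp _)).
rewrite -mulmxBl; apply: (mrel HQ HS Hg He); apply: qmap_sub.
exact: Fsp_mul (graded_m Hl.1) (Csp_F y).
Qed.

Lemma ind_one (P : pres K R n) a y : ind (mp P) (mp P) 1%:M a y = y.
Proof. by rewrite /ind mulmx1 qmap_val. Qed.

Lemma lift_one (M : pmod K R n) (P : pres K R n) (alpha : forall a, coker P a -> M a) :
  is_lift P P M M alpha alpha (fun a x => x) 1%:M.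
Proof.
split.
  move=> i j; rewrite mxE; case: (eqVneq i j) => [->|]; first by move=> _; apply: leg_refl.
  by rewrite mulr0n eqxx.
by move=> a x _; rewrite mulmx1.
Qed.

End Merged.

Unset Implicit Arguments.

Theorem mainTheorem6 (K : fieldType) (R : realType) (n : nat)
  (kk : 'I_n -> nat) (G : forall i : 'I_n, 'I_(kk i) -> R) (delta : R) :
  (forall i, 0 < kk i)%N ->
  delta_lt_half_ctrl G delta ->
  (forall (M : pmod K R n) (P Q : pres K R n)
          (alpha : forall a, coker P a -> M a) (beta : forall a, coker Q a -> M a),
     is_pmod M -> presents P M alpha -> presents Q M beta ->
     pmod_iso (coker (mpres G delta P)) (coker (mpres G delta Q)))
  /\
  (forall (M N : pmod K R n) (P Q : pres K R n)
          (alpha : forall a, coker P a -> M a) (beta : forall a, coker Q a -> N a)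
          (f : forall a, M a -> N a),
     is_pmod M -> is_pmod N -> presents P M alpha -> presents Q N beta ->
     is_morph M N f ->
     (exists c, is_lift P Q M N alpha beta f c) /\
     (forall c, is_lift P Q M N alpha beta f c ->
        graded_mx (gen (mpres G delta P)) (gen (mpres G delta Q)) c /\
        induces (mpres G delta P) (mpres G delta Q) c /\
        (forall c', is_lift P Q M N alpha beta f c' ->
           forall a y, ind (mpres G delta P) (mpres G delta Q) c a y
                       = ind (mpres G delta P) (mpres G delta Q) c' a y)))
  /\
  (forall (M : pmod K R n) (P : pres K R n) (alpha : forall a, coker P a -> M a),
     is_pmod M -> presents P M alpha ->
     is_lift P P M M alpha alpha (fun a x => x) 1%:M /\
     (forall a y, ind (mpres G delta P) (mpres G delta P) 1%:M a y = y))
  /\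
  (forall (M N L : pmod K R n) (P Q S : pres K R n)
          (alpha : forall a, coker P a -> M a) (beta : forall a, coker Q a -> N a)
          (gamma : forall a, coker S a -> L a)
          (f : forall a, M a -> N a) (g : forall a, N a -> L a)
          (c : 'M[K]_(ng P, ng Q)) (d : 'M[K]_(ng Q, ng S)),
     is_pmod M -> is_pmod N -> is_pmod L ->
     presents P M alpha -> presents Q N beta -> presents S L gamma ->
     is_morph M N f -> is_morph N L g ->
     is_lift P Q M N alpha beta f c -> is_lift Q S N L beta gamma g d ->
     is_lift P S M L alpha gamma (fun a x => g a (f a x)) (c *m d) /\
     (forall a y, ind (mpres G delta P) (mpres G delta S) (c *m d) a y
                  = ind (mpres G delta Q) (mpres G delta S) d a
                      (ind (mpres G delta P) (mpres G delta Q) c a y))).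
Proof.
move=> Hk Hd.
have Hid : forall M : pmod K R n, is_morph M M (fun a x => x).
  by move=> M; split; [move=> a k x y | ].
split.
  move=> M P Q alpha beta _ HP HQ.
  have [c Hc] := lift_exists HP HQ (Hid M).
  have [c' Hc'] := lift_exists HQ HP (Hid M).
  exists (ind (mpres G delta P) (mpres G delta Q) c); split.
    exact: (m_induces Hk Hd HP HQ (Hid M) Hc).2.
  exists (ind (mpres G delta Q) (mpres G delta P) c'); split.
  - exact: (m_induces Hk Hd HQ HP (Hid M) Hc').2.
  - move=> a x; rewrite -(m_ind_comp Hk Hd HQ HP (Hid M) Hc Hc').
    rewrite (m_ind_eq Hk Hd HP (lift_comp Hc Hc') (lift_one alpha)).
    exact: ind_one.
  - move=> a x; rewrite -(m_ind_comp Hk Hd HP HQ (Hid M) Hc' Hc).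
    rewrite (m_ind_eq Hk Hd HQ (lift_comp Hc' Hc) (lift_one beta)).
    exact: ind_one.
split.
  move=> M N P Q alpha beta f _ _ HP HQ Hf; split; first exact: lift_exists.
  move=> c Hc; split; first exact: (graded_m Hk Hd Hc.1).
  split; first exact: (m_induces Hk Hd HP HQ Hf Hc).
  move=> c' Hc'; exact: (m_ind_eq Hk Hd HQ Hc Hc').
split.
  move=> M P alpha _ HP; split; [exact: lift_one | exact: ind_one].
move=> M N L P Q S alpha beta gamma f g c d _ _ _ HP HQ HS Hf Hg Hc Hd'.
split; first exact: lift_comp Hc Hd'.
exact: (m_ind_comp Hk Hd HQ HS Hg Hc Hd').
Qed.
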